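(* Let $k\subset K$ be $\Delta$-fields, let $\Lambda\subset\Delta$ and $\Pi=\Delta\setminus\Lambda$. Assume that $C_k^\Lambda$ is a $\Pi$-differentially closed $\Pi$-field. If $K$ is a $\Delta$-constrained extension of $k$, then $C_K^\Lambda=C_k^\Lambda$.
   Context: All fields have characteristic zero; a $\Delta$-field is a field with a finite set $\Delta$ of commuting derivations. $C_k^\Lambda=\{c\in k:\partial c=0\ \forall\partial\in\Lambda\}$, which is a $\Pi$-field. A $\Pi$-field is $\Pi$-differentially closed if every finite system $P_1=\cdots=P_r=0,\ Q\ne0$ of $\Pi$-differential polynomials over it having a solution in some $\Pi$-extension field has a solution in it (if $\Pi=\emptyset$ this means algebraically closed). For $\eta=(\eta_1,\ldots,\eta_r)\in K^r$, $k\{\eta\}_\Delta$ is the ring generated over $k$ by the $\eta_i$ and all their derivatives. $\eta$ is constrained over $k$ if there exist $P_1,\ldots,P_s,Q\in k\{y_1,\ldots,y_r\}_\Delta$ with $P_j(\eta)=0$, $Q(\eta)\ne0$, such that for every $\Delta$-field $E\supset k$ and every $\zeta\in E^r$ with $P_j(\zeta)=0$ for all $j$ and $Q(\zeta)\ne0$, the map $\eta_i\mapsto\zeta_i$ induces a $k$-isomorphism of $\Delta$-rings $k\{\eta\}_\Delta\to k\{\zeta\}_\Delta$. $K$ is a ($\Delta$-)constrained extension of $k$ if every finite family of elements of $K$ is constrained over $k$. *)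

(* Defs.v *)
From HB Require Import structures.
From mathcomp Require Import all_boot all_algebra.
Set Implicit Arguments. Unset Strict Implicit. Unset Printing Implicit Defensive.
Import GRing.Theory.
Local Open Scope ring_scope.

Record dfield (J : Type) := DField {
  dcar :> fieldType;
  dder : J -> dcar -> dcar;
  dder_add : forall j (x y : dcar), dder j (x + y) = dder j x + dder j y;
  dder_mul : forall j (x y : dcar), dder j (x * y) = dder j x * y + x * dder j y;
  dder_comm : forall i j (x : dcar), dder i (dder j x) = dder j (dder i x);
  dchar0 : [pchar dcar] =i pred0 }.
Arguments dder {J} d j x.

(** Differential polynomials in [r] indeterminates y_0..y_(r-1), with
    coefficients from [A] and derivations indexed by [J], presented as
    expressions of the differential ring they generate. *)
Inductive dterm (A J : Type) (r : nat) : Type :=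
  | DConst of A
  | DVar of 'I_r
  | DAdd of dterm A J r & dterm A J r
  | DOpp of dterm A J r
  | DMul of dterm A J r & dterm A J r
  | DDer of J & dterm A J r.

Fixpoint deval (A J : Type) (R : nzRingType) (c : A -> R) (D : J -> R -> R)
    (r : nat) (x : 'I_r -> R) (t : dterm A J r) : R :=
  match t with
  | DConst a => c a
  | DVar i => x i
  | DAdd t1 t2 => deval c D x t1 + deval c D x t2
  | DOpp t1 => - deval c D x t1
  | DMul t1 t2 => deval c D x t1 * deval c D x t2
  | DDer j t1 => D j (deval c D x t1)
  end.

Definition dmorph (J : Type) (k E : dfield J) (f : k -> E) : Prop :=
  [/\ f 1 = 1,
      forall x y, f (x + y) = f x + f y,
      forall x y, f (x * y) = f x * f y
    & forall j x, f (dder k j x) = dder E j (f x)].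

Definition dconst (I : finType) (k : dfield I) (L : {set I}) (x : k) : Prop :=
  forall i, i \in L -> dder k i x = 0.

Definition devalK (I : finType) (k K : dfield I) (iota : k -> K) (r : nat)
    (eta : 'I_r -> K) (P : dterm k I r) : K :=
  deval iota (dder K) eta P.

(** The map eta_i |-> zeta_i induces a k-isomorphism of Delta-rings
    k{eta} -> k{zeta}: the map P(eta) |-> P(zeta) is a well-defined function
    (a Delta-ring k-morphism onto k{zeta} by construction) and is injective
    on k{eta}. *)
Definition induced_iso (I : finType) (k K E : dfield I) (iota : k -> K)
    (psi : k -> E) (r : nat) (eta : 'I_r -> K) (zeta : 'I_r -> E) : Prop :=
  exists f : K -> E,
    (forall P, f (devalK iota eta P) = devalK psi zeta P) /\
    (forall P Q, f (devalK iota eta P) = f (devalK iota eta Q) ->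
                 devalK iota eta P = devalK iota eta Q).

Definition constrained (I : finType) (k K : dfield I) (iota : k -> K)
    (r : nat) (eta : 'I_r -> K) : Prop :=
  exists (s : nat) (Ps : 'I_s -> dterm k I r) (Q : dterm k I r),
    [/\ forall j, devalK iota eta (Ps j) = 0,
        devalK iota eta Q != 0
      & forall (E : dfield I) (psi : k -> E), dmorph psi ->
        forall zeta : 'I_r -> E,
          (forall j, devalK psi zeta (Ps j) = 0) ->
          devalK psi zeta Q != 0 ->
          induced_iso iota psi eta zeta].

Definition constrained_ext (I : finType) (k K : dfield I) (iota : k -> K)
    : Prop :=
  forall (r : nat) (eta : 'I_r -> K), constrained iota eta.

(** Pi-fields have their derivations indexed by the elements of Pi. *)
Definition idx (I : finType) (Pi : {set I}) : Type := {i : I | i \in Pi}.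

Definition sub_dmorph (I : finType) (k : dfield I) (Pi : {set I})
    (S : k -> Prop) (E : dfield (idx Pi)) (psi : {x : k | S x} -> E) : Prop :=
  [/\ forall a, sval a = 1 -> psi a = 1,
      forall a b c, sval c = sval a + sval b -> psi c = psi a + psi b,
      forall a b c, sval c = sval a * sval b -> psi c = psi a * psi b
    & forall (j : idx Pi) a b, sval b = dder k (sval j) (sval a) ->
        psi b = dder E j (psi a)].

Definition diff_closed_sub (I : finType) (k : dfield I) (Pi : {set I})
    (S : k -> Prop) : Prop :=
  forall (n s : nat) (Ps : 'I_s -> dterm {x : k | S x} (idx Pi) n)
         (Q : dterm {x : k | S x} (idx Pi) n),
    (exists (E : dfield (idx Pi)) (psi : {x : k | S x} -> E),
       sub_dmorph psi /\
       exists z : 'I_n -> E,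
         (forall j, deval psi (dder E) z (Ps j) = 0) /\
         deval psi (dder E) z Q != 0) ->
    exists x : 'I_n -> k,
      [/\ forall i, S (x i),
          forall j, deval (fun a => sval a)
                      (fun j : idx Pi => dder k (sval j)) x (Ps j) = 0
        & deval (fun a => sval a) (fun j : idx Pi => dder k (sval j)) x Q != 0].

(* Main.v *)
Require Import Defs.
From HB Require Import structures.
From mathcomp Require Import all_boot all_algebra.
From mathcomp Require Import ring.
From Stdlib Require Import ClassicalEpsilon Classical.
Import GRing.Theory.
Set Implicit Arguments. Unset Strict Implicit.
Local Open Scope ring_scope.

Section DF.
Variables (J : Type) (E : dfield J).
Lemma dder0 j : dder E j 0 = 0.
Proof. by apply: (addrI (dder E j 0)); rewrite -dder_add !addr0. Qed.
Lemma dderN j x : dder E j (- x) = - dder E j x.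
Proof. by apply: (addrI (dder E j x)); rewrite -dder_add !subrr dder0. Qed.
Lemma dder1 j : dder E j 1 = 0.
Proof.
have h := @dder_mul _ E j 1 1; rewrite !mulr1 !mul1r in h.
by apply: (addrI (dder E j 1)); rewrite addr0 -h.
Qed.
Lemma dderV j x : dder E j x = 0 -> dder E j x^-1 = 0.
Proof.
move=> h; have [->|nz] := eqVneq x 0; first by rewrite invr0 dder0.
have := @dder_mul _ E j x x^-1; rewrite mulfV // dder1 h mul0r add0r => /esym/eqP.
by rewrite mulf_eq0 (negbTE nz) /= => /eqP.
Qed.
End DF.

Definition morph (F L : fieldType) (phi : F -> L) :=
  [/\ phi 1 = 1, (forall x y, phi (x + y) = phi x + phi y)
    & (forall x y, phi (x * y) = phi x * phi y)].

Section Morph.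
Variables (F L : fieldType) (phi : F -> L) (hphi : morph phi).
Lemma morph0 : phi 0 = 0.
Proof. case: hphi => _ hadd _; by apply: (addrI (phi 0)); rewrite -hadd !addr0. Qed.
Lemma morphN x : phi (- x) = - phi x.
Proof. case: hphi => _ hadd _; by apply: (addrI (phi x)); rewrite -hadd !subrr morph0. Qed.
Lemma morphD x y : phi (x + y) = phi x + phi y.
Proof. by case: hphi. Qed.
Lemma morphM x y : phi (x * y) = phi x * phi y.
Proof. by case: hphi. Qed.
Lemma morph1 : phi 1 = 1.
Proof. by case: hphi. Qed.
Lemma morphV x : phi (x^-1) = (phi x)^-1.
Proof.
have [->|nz] := eqVneq x 0; first by rewrite invr0 morph0 invr0.
have h : phi x * phi x^-1 = 1 by rewrite -morphM mulfV // morph1.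
have nz' : phi x != 0 by apply/eqP => e; move: h; rewrite e mul0r => /eqP; rewrite eq_sym oner_eq0.
by apply: (mulfI nz'); rewrite h mulfV.
Qed.
Lemma morph_eq0 x : phi x = 0 -> x = 0.
Proof.
move=> e; have [//|nz] := eqVneq x 0.
have : phi (x * x^-1) = 0 by rewrite morphM e mul0r.
by rewrite mulfV // morph1 => /eqP; rewrite oner_eq0.
Qed.
End Morph.

Lemma dmorph_morph (J : Type) (k E : dfield J) (f : k -> E) : dmorph f -> morph f.
Proof. by case. Qed.
Lemma dmorph_der (J : Type) (k E : dfield J) (f : k -> E) : dmorph f ->
  forall j x, f (dder k j x) = dder E j (f x).
Proof. by case. Qed.

Lemma morph_id (F : fieldType) : morph (fun x : F => x).
Proof. by []. Qed.

Section Main.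
Variables (I : finType) (k : dfield I) (Lambda : {set I}).

Section Cst.
Variable (E : dfield I).
Lemma cst0 : dconst Lambda (0 : E).
Proof. by move=> i _; rewrite dder0. Qed.
Lemma cst1 : dconst Lambda (1 : E).
Proof. by move=> i _; rewrite dder1. Qed.
Lemma cstD (x y : E) : dconst Lambda x -> dconst Lambda y -> dconst Lambda (x + y).
Proof. by move=> hx hy i hi; rewrite dder_add hx // hy // addr0. Qed.
Lemma cstN (x : E) : dconst Lambda x -> dconst Lambda (- x).
Proof. by move=> hx i hi; rewrite dderN hx // oppr0. Qed.
Lemma cstM (x y : E) : dconst Lambda x -> dconst Lambda y -> dconst Lambda (x * y).
Proof. by move=> hx hy i hi; rewrite dder_mul hx // hy // mul0r mulr0 addr0. Qed.
Lemma cstV (x : E) : dconst Lambda x -> dconst Lambda (x^-1).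
Proof. by move=> hx i hi; rewrite dderV // hx. Qed.
Lemma cstder j (x : E) : dconst Lambda x -> dconst Lambda (dder E j x).
Proof. by move=> hx i hi; rewrite dder_comm hx // dder0. Qed.
End Cst.

Lemma cst_morph (E : dfield I) (psi : k -> E) : dmorph psi ->
  forall a, dconst Lambda a -> dconst Lambda (psi a).
Proof.
move=> hp a ha i hi; rewrite -(dmorph_der hp) ha //.
exact: (morph0 (dmorph_morph hp)).
Qed.

Definition Sk := {x : k | dconst Lambda x}.
Definition Pidx := idx (~: Lambda).

Definition toS (y : k) : Sk :=
  match excluded_middle_informative (dconst Lambda y) with
  | left h => exist _ y h
  | right _ => exist _ 0 (@cst0 k)
  end.
Lemma toSE y : dconst Lambda y -> sval (toS y) = y.
Proof. by rewrite /toS; case: excluded_middle_informative. Qed.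

Definition tS n := dterm Sk Pidx n.

Definition evT (L : fieldType) (phi : k -> L) (D : Pidx -> L -> L) n
  (z : 'I_n -> L) (T : tS n) : L := deval (fun a : Sk => phi (sval a)) D z T.

Lemma evS_const (E : dfield I) (psi : k -> E) (hp : dmorph psi) n
  (z : 'I_n -> E) (hz : forall i, dconst Lambda (z i)) (T : tS n) :
  dconst Lambda (evT psi (fun j => dder E (sval j)) z T).
Proof.
elim: T => /=.
- by move=> a; apply: cst_morph => //; case: a.
- exact: hz.
- by move=> ? h1 ? h2; apply: cstD.
- by move=> ? h1; apply: cstN.
- by move=> ? h1 ? h2; apply: cstM.
- by move=> j ? h; apply: cstder.
Qed.

Section Sums.
Variable n : nat.
Fixpoint sumL (L : fieldType) (phi : k -> L) (ev : tS n -> L)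
  (l : seq (k * tS n)) : L :=
  match l with [::] => 0 | p :: l' => phi p.1 * ev p.2 + sumL phi ev l' end.

Lemma sumL_cat L phi ev l1 l2 : @sumL L phi ev (l1 ++ l2) = sumL phi ev l1 + sumL phi ev l2.
Proof. by elim: l1 => [|p l1 IH] /=; rewrite ?add0r // IH addrA. Qed.

Lemma sumL_ext L phi ev1 ev2 l : (forall T, ev1 T = ev2 T) ->
  @sumL L phi ev1 l = sumL phi ev2 l.
Proof. by move=> h; elim: l => [|p l IH] //=; rewrite IH h. Qed.

Lemma sumL_ev0 L phi ev l : (forall T, ev T = 0) -> @sumL L phi ev l = 0.
Proof. by move=> h; elim: l => [|p l IH] //=; rewrite IH h mulr0 addr0. Qed.

Lemma sumL_map_snd L phi ev f l :
  @sumL L phi ev (map (fun p => (p.1, f p.2)) l) = sumL phi (fun T => ev (f T)) l.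
Proof. by elim: l => [|p l IH] //=; rewrite IH. Qed.

Lemma sumL_opp L phi ev l : morph phi ->
  @sumL L phi ev (map (fun p => (- p.1, p.2)) l) = - sumL phi ev l.
Proof.
move=> hp; elim: l => [|p l IH] /=; first by rewrite oppr0.
by rewrite IH (morphN hp) opprD mulNr.
Qed.

Lemma sumL_mul L phi ev l1 l2 : morph phi ->
  (forall T1 T2, ev (DMul T1 T2) = ev T1 * ev T2) ->
  @sumL L phi ev (flatten (map (fun p => map (fun q => (p.1 * q.1, DMul p.2 q.2)) l2) l1))
  = sumL phi ev l1 * sumL phi ev l2.
Proof.
move=> hp hm; elim: l1 => [|p l1 IH] /=; first by rewrite mul0r.
rewrite sumL_cat IH mulrDl; congr (_ + _).
clear IH; elim: l2 => [|q l2 IH2] /=; first by rewrite mulr0.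
by rewrite IH2 hm (morphM hp) mulrDr; congr (_ + _); ring.
Qed.
End Sums.


Definition mkD n (j : I) (T : tS n) : tS n :=
  match insub j with Some j' => DDer j' T | None => T end.

Fixpoint rep n (t : dterm k I n) : seq (k * tS n) :=
  match t with
  | DConst a => [:: (a, DConst Pidx n (toS 1))]
  | DVar i => [:: (1, DVar Sk Pidx i)]
  | DAdd t1 t2 => rep t1 ++ rep t2
  | DOpp t1 => map (fun p => (- p.1, p.2)) (rep t1)
  | DMul t1 t2 => flatten (map (fun p => map (fun q => (p.1 * q.1, DMul p.2 q.2)) (rep t2)) (rep t1))
  | DDer j t1 =>
      if j \in Lambda then map (fun p => (dder k j p.1, p.2)) (rep t1)
      else map (fun p => (dder k j p.1, p.2)) (rep t1) ++ map (fun p => (p.1, mkD j p.2)) (rep t1)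
  end.

Lemma sumL_der (E : dfield I) (psi : k -> E) (hp : dmorph psi) n ev j l :
  dder E j (@sumL n E psi ev l) =
  sumL psi ev (map (fun p => (dder k j p.1, p.2)) l) + sumL psi (fun T => dder E j (ev T)) l.
Proof.
elim: l => [|p l IH] /=; first by rewrite dder0 addr0.
rewrite dder_add dder_mul IH (dmorph_der hp); ring.
Qed.

Lemma rep_ok (E : dfield I) (psi : k -> E) (hp : dmorph psi) n
  (z : 'I_n -> E) (hz : forall i, dconst Lambda (z i)) (t : dterm k I n) :
  deval psi (dder E) z t = sumL psi (evT psi (fun j => dder E (sval j)) z) (rep t).
Proof.
have hm := dmorph_morph hp.
elim: t => /=.
- by move=> a; rewrite /evT /= toSE ?(morph1 hm) ?mulr1 ?addr0 //; apply: cst1.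
- by move=> i; rewrite (morph1 hm) mul1r addr0.
- by move=> t1 -> t2 ->; rewrite sumL_cat.
- by move=> t1 ->; rewrite sumL_opp.
- by move=> t1 -> t2 ->; rewrite sumL_mul.
- move=> j t1 ->; rewrite sumL_der //.
  case: ifP => hj.
  + rewrite (@sumL_ev0 _ _ _ (fun T => dder E j _)) ?addr0 // => T.
    by apply: evS_const.
  + rewrite sumL_cat sumL_map_snd; congr (_ + _); apply: sumL_ext => T.
    rewrite /mkD; case: insubP => [j' _ hj'|]; first by rewrite /evT /= hj'.
    by rewrite in_setC hj.
Qed.

Definition S (y : k) := dconst Lambda y.

Fixpoint lin (L : fieldType) (e : k -> L) (s : seq k) (vs : seq L) : L :=
  match s, vs with y :: s', v :: vs' => e y * v + lin e s' vs' | _, _ => 0 end.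

Definition indep (L : fieldType) (e : k -> L) (vs : seq L) :=
  forall s, size s = size vs -> (forall y, y \in s -> S y) -> lin e s vs = 0 ->
  forall y, y \in s -> y = 0.

Lemma lin_scale L e c s vs : morph e ->
  @lin L e (map (fun y => c * y) s) vs = e c * lin e s vs.
Proof.
move=> he; elim: s vs => [|y s IH] [|v vs] /=; rewrite ?mulr0 //.
by rewrite IH (morphM he) mulrDr mulrA.
Qed.

Lemma indep_tail L e v vs : morph e -> @indep L e (v :: vs) -> indep e vs.
Proof.
move=> he hi s hs hS hl y hy.
have := hi (0 :: s); rewrite /= hs (morph0 he) mul0r add0r hl => /(_ erefl).
apply => //; last by rewrite inE hy orbT.
by move=> z; rewrite inE => /orP [/eqP ->|/hS //]; apply: cst0.
Qed.

Lemma indep_cons L e v vs : morph e -> @indep L e vs ->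
  ~ (exists s, size s = size vs /\ (forall y, y \in s -> S y) /\ v = lin e s vs) ->
  indep e (v :: vs).
Proof.
move=> he hi hn [|s0 s] //= [hs] hS hl y.
have hS0 : S s0 by apply: hS; rewrite inE eqxx.
have hSs : forall y, y \in s -> S y by move=> z hz; apply: hS; rewrite inE hz orbT.
have [e0|nz] := eqVneq s0 0.
  move: hl; rewrite e0 (morph0 he) mul0r add0r => hl.
  by rewrite inE => /orP [/eqP ->|hy] //; apply: (hi s).
exfalso; apply: hn; exists (map (fun y => (- s0^-1) * y) s); split; first by rewrite size_map.
split.
  move=> z /mapP [w hw ->]; apply: cstM; last exact: hSs.
  by apply: cstN; apply: cstV.
rewrite lin_scale // (morphN he) (morphV he).
have nz' : e s0 != 0 by apply/eqP => /(morph_eq0 he) /eqP; rewrite (negbTE nz).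
have -> : lin e s vs = - (e s0 * v) by apply/eqP; rewrite -addr_eq0 addrC hl.
by rewrite mulNr mulrN opprK mulrA mulVf // mul1r.
Qed.

Section NF.
Variable n : nat.

Fixpoint allz (L : fieldType) (ev : tS n -> L) (F : seq (tS n)) : Prop :=
  match F with [::] => True | T :: F' => ev T = 0 /\ allz ev F' end.

Fixpoint termlin (s : seq k) (Ts : seq (tS n)) : tS n :=
  match s, Ts with
  | y :: s', T :: Ts' => DAdd (DMul (DConst Pidx n (toS y)) T) (termlin s' Ts')
  | _, _ => DConst Pidx n (toS 0) end.

Lemma ev_termlin L phi D z s Ts : morph phi -> (forall y, y \in s -> S y) ->
  evT phi D z (termlin s Ts) = @lin L phi s (map (@evT L phi D n z) Ts).
Proof.
move=> hp; elim: s Ts => [|y s IH] [|T Ts] hS.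
- by rewrite /evT /= toSE ?(morph0 hp) //; apply: cst0.
- by rewrite /evT /= toSE ?(morph0 hp) //; apply: cst0.
- by rewrite /evT /= toSE ?(morph0 hp) //; apply: cst0.
have hy : S y by apply: hS; rewrite inE eqxx.
have hs : forall w, w \in s -> S w by move=> w hw; apply: hS; rewrite inE hw orbT.
rewrite /= -IH //.
by rewrite /evT /= toSE.
Qed.

Fixpoint combw (a : k) (s : seq k) (l : seq (k * tS n)) : seq (k * tS n) :=
  match s, l with y :: s', p :: l' => (p.1 + a * y, p.2) :: combw a s' l' | _, _ => [::] end.

Lemma map_snd_combw a s l : size s = size l -> map snd (combw a s l) = map snd l.
Proof. by elim: s l => [|y s IH] [|p l] //= [/IH ->]. Qed.

Lemma sumL_combw L phi ev a s l : morph phi -> size s = size l ->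
  @sumL n L phi ev (combw a s l) = sumL phi ev l + phi a * lin phi s (map ev (map snd l)).
Proof.
move=> hp; elim: s l => [|y s IH] [|p l] //= => [_|[/IH ->]]; first by rewrite mulr0 addr0.
rewrite (morphD hp) (morphM hp); ring.
Qed.

Fixpoint comba (T : tS n) (s : seq k) (l : seq (k * tS n)) : seq (k * tS n) :=
  match s, l with
  | y :: s', p :: l' => (p.1, DAdd p.2 (DMul (DConst Pidx n (toS y)) T)) :: comba T s' l'
  | _, _ => [::] end.

Lemma map_fst_comba T s l : size s = size l -> map fst (comba T s l) = map fst l.
Proof. by elim: s l => [|y s IH] [|p l] //= [/IH ->]. Qed.

Lemma sumL_comba L phi D z T s l : morph phi -> (forall y, y \in s -> S y) -> size s = size l ->
  @sumL n L phi (evT phi D z) (comba T s l) =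
  sumL phi (evT phi D z) l + phi (lin (fun y => y) s (map fst l)) * evT phi D z T.
Proof.
move=> hp; elim: s l => [|y s IH] [|p l] //= hS; rewrite ?(morph0 hp) ?mul0r ?addr0 //.
case=> hs; rewrite IH //; last by move=> w hw; apply: hS; rewrite inE hw orbT.
rewrite /evT /= toSE; last by apply: hS; rewrite inE eqxx.
rewrite -!/(evT _ _ _ _) (morphD hp) (morphM hp); ring.
Qed.

Lemma nfw (L0 : fieldType) (iota : k -> L0) (hi : morph iota) D0 (x : 'I_n -> L0)
  (l : seq (k * tS n)) :
  exists F l', [/\ allz (evT iota D0 x) F,
    indep iota (map (evT iota D0 x) (map snd l')) &
    forall (L : fieldType) phi D z, morph phi -> allz (@evT L phi D n z) F ->
      sumL phi (evT phi D z) l = sumL phi (evT phi D z) l'].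
Proof.
elim: l => [|[a T] l [F [l1 [hF hind hsum]]]].
  exists [::], [::]; split => //; by move=> [|]. 
set vs := map (evT iota D0 x) (map snd l1).
have [[s [hs [hS hv]]]|hn] := classic (exists s, size s = size vs /\
   (forall y, y \in s -> S y) /\ evT iota D0 x T = lin iota s vs).
- have hs' : size s = size l1 by rewrite hs /vs !size_map.
  exists (DAdd T (DOpp (termlin s (map snd l1))) :: F), (combw a s l1); split.
  + split => //; rewrite /evT /= -!/(evT _ _ _ _) ev_termlin // hv /vs subrr //.
  + by rewrite map_snd_combw.
  + move=> L phi D z hp /= [h0 hz]; rewrite sumL_combw // hsum //.
    move: h0; rewrite /evT /= -!/(evT _ _ _ _) ev_termlin // => /eqP; rewrite subr_eq0 => /eqP ->.
    by rewrite addrC.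
- exists F, ((a, T) :: l1); split => //; first exact: indep_cons.
  by move=> L phi D z hp hz /=; rewrite hsum.
Qed.

Lemma nfa (l : seq (k * tS n)) :
  exists l', indep (fun y : k => y) (map fst l') /\
    forall (L : fieldType) phi D z, morph phi ->
      sumL phi (@evT L phi D n z) l = sumL phi (evT phi D z) l'.
Proof.
elim: l => [|[a T] l [l1 [hind hsum]]].
  by exists [::]; split => //; move=> [|].
have [[s [hs [hS hv]]]|hn] := classic (exists s, size s = size (map fst l1) /\
   (forall y, y \in s -> S y) /\ a = lin (fun y => y) s (map fst l1)).
- have hs' : size s = size l1 by rewrite hs size_map.
  exists (comba T s l1); split; first by rewrite map_fst_comba.
  move=> L phi D z hp /=; rewrite sumL_comba // hsum // -hv addrC.
  by rewrite /evT.
- exists ((a, T) :: l1); split; first exact: indep_cons.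
  by move=> L phi D z hp /=; rewrite hsum.
Qed.

End NF.

Lemma lin_der (K : dfield I) (iota : k -> K) (hp : dmorph iota) j (hj : j \in Lambda)
  a ws : (forall w, w \in ws -> dconst Lambda w) ->
  dder K j (lin iota a ws) = lin iota (map (dder k j) a) ws.
Proof.
elim: a ws => [|y a IH] [|w ws] hc /=; rewrite ?dder0 //.
rewrite dder_add dder_mul IH; last by move=> u hu; apply: hc; rewrite inE hu orbT.
rewrite (hc w) ?inE ?eqxx // mulr0 addr0 (dmorph_der hp) //.
Qed.

Lemma LD (K : dfield I) (iota : k -> K) (hp : dmorph iota) ws :
  (forall w, w \in ws -> dconst Lambda w) -> indep iota ws ->
  forall a, size a = size ws -> lin iota a ws = 0 -> forall y, y \in a -> y = 0.
Proof.
have hm := dmorph_morph hp.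
elim: ws => [|w ws IH] hc hi [|a0 a] //= [hs] hl.
have hc' : forall u, u \in ws -> dconst Lambda u by move=> u hu; apply: hc; rewrite inE hu orbT.
have hit := indep_tail hm hi.
have [e0|nz] := eqVneq a0 0.
  move: hl; rewrite e0 (morph0 hm) mul0r add0r => hl y.
  by rewrite inE => /orP [/eqP ->|hy] //; apply: (IH hc' hit a).
exfalso.
pose b := map (fun y => a0^-1 * y) a.
have hl1 : lin iota (1 :: b) (w :: ws) = 0.
  have := lin_scale (a0^-1) (a0 :: a) (w :: ws) hm.
  by rewrite /= mulVf // hl mulr0.
have hSb : forall y, y \in b -> S y.
  move=> y hy i hi'.
  have h := lin_der hp hi' (1 :: b) hc; rewrite hl1 dder0 /= dder1 (morph0 hm) mul0r add0r in h.
  have hsz : size (map (dder k i) b) = size ws by rewrite !size_map.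
  by apply: (IH hc' hit _ hsz (esym h)); apply: map_f.
have := hi (1 :: b); rewrite /= /b size_map hs => /(_ erefl).
have hS1 : forall y, y \in 1 :: b -> S y.
  move=> y; rewrite inE => /orP [/eqP ->|hy]; first exact: cst1.
  by apply: hSb.
move=> /(_ hS1 hl1 1); rewrite inE eqxx => /(_ erefl) /eqP; rewrite oner_eq0.
by [].
Qed.

Lemma sumL_lin n L phi ev l :
  @sumL n L phi ev l = lin phi (map fst l) (map ev (map snd l)).
Proof. by elim: l => [|p l IH] //=; rewrite IH. Qed.

Lemma sumL_lin_id n ev l :
  @sumL n k (fun y => y) ev l = lin (fun y => y) (map ev (map snd l)) (map fst l).
Proof. by elim: l => [|p l IH] //=; rewrite IH mulrC. Qed.

Lemma lin_zero L e s vs : morph e -> (forall y, y \in s -> y = 0) -> @lin L e s vs = 0.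
Proof.
move=> he; elim: s vs => [|y s IH] [|v vs] //= h.
have hy : y = 0 by apply: h; rewrite inE eqxx.
have hs : forall z, z \in s -> z = 0 by move=> z hz; apply: h; rewrite inE hz orbT.
by rewrite IH // hy (morph0 he) mul0r addr0.
Qed.

Lemma In_zero (A : Type) (f : A -> k) p l : List.In p l ->
  (forall y, y \in map f l -> y = 0) -> f p = 0.
Proof.
elim: l => [|q l IH] //= [->|hin] h; first by apply: h; rewrite inE eqxx.
by apply: IH => // y hy; apply: h; rewrite inE hy orbT.
Qed.

Lemma sumL_nz n L phi ev l : @sumL n L phi ev l != 0 ->
  exists p, List.In p l /\ ev p.2 != 0.
Proof.
elim: l => [|p l IH]; first by move=> /=; rewrite eqxx.
case: (eqVneq (ev p.2) 0) => [e|nz].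
  rewrite /= e mulr0 add0r => /IH [q [h1 h2]].
  by exists q; split => //; right.
by move=> _; exists p; split => //; left.
Qed.

Lemma allz_cat n L ev F1 F2 : @allz n L ev (F1 ++ F2) <-> allz ev F1 /\ allz ev F2.
Proof. by elim: F1 => [|T F1 IH] /=; [tauto|rewrite IH; tauto]. Qed.

Lemma allz_flatten n L ev (A : eqType) (f : A -> seq (tS n)) r :
  @allz n L ev (flatten (map f r)) <-> forall j, j \in r -> allz ev (f j).
Proof.
elim: r => [|j r IH] /=; first by split.
rewrite allz_cat IH; split.
  by case=> h1 h2 i; rewrite inE => /orP [/eqP ->|/h2].
by move=> h; split; [apply: h; rewrite inE eqxx|move=> i hi; apply: h; rewrite inE hi orbT].
Qed.

Lemma allz_nth n L ev F d : @allz n L ev F <-> forall i : 'I_(size F), ev (nth d F i) = 0.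
Proof.
elim: F => [|T F IH] /=; first by split => // _ [m hm]; exfalso; rewrite ltn0 in hm.
rewrite IH; split.
  by case=> h0 h [[|i] hi] //=; apply: (h (Ordinal (hi : (i < size F)%N))).
move=> h; split; first exact: (h ord0).
by move=> [i hi]; apply: (h (Ordinal (hi : (i.+1 < (size F).+1)%N))).
Qed.

Lemma in_map_ex (T : Type) (R : eqType) (f : T -> R) l y :
  y \in map f l -> exists a, y = f a.
Proof.
elim: l => [|a l IH] //=; rewrite inE => /orP [/eqP ->|/IH //]; by exists a.
Qed.

Lemma dmorph_id (E : dfield I) : dmorph (fun y : E => y).
Proof. by []. Qed.

End Main.

Unset Implicit Arguments.
Unset Strict Implicit.

Theorem lemma9p3 (I : finType) (k K : dfield I) (iota : k -> K)
    (Lambda : {set I}) :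
  dmorph iota ->
  diff_closed_sub (~: Lambda) (@dconst I k Lambda) ->
  constrained_ext iota ->
  forall x : K, dconst Lambda x <-> exists c : k, dconst Lambda c /\ iota c = x.
Proof.
move=> hiota hdc hce x; split; last first.
  by case=> c [hc <-]; apply: cst_morph.
move=> hx.
have hm := dmorph_morph hiota.
pose eta : 'I_1 -> K := fun _ => x.
have heta : forall i, dconst Lambda (eta i) by [].
have [s [Ps [Q [hPs hQ hiso]]]] := hce 1%N eta.
pose DK := fun j : Pidx Lambda => dder K (sval j).
pose evK := @evT I k Lambda K iota DK 1%N eta.
pose Dk := fun j : Pidx Lambda => dder k (sval j).
have stepP : forall j, exists F : seq (tS k Lambda 1), allz evK F /\
   forall c : 'I_1 -> k, (forall i, dconst Lambda (c i)) ->
     allz (@evT I k Lambda k (fun y => y) Dk 1%N c) F ->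
     devalK (fun y => y) c (Ps j) = 0.
  move=> j.
  have [F [l' [hF hind hsum]]] := @nfw I k Lambda 1%N K iota hm DK eta (rep Lambda (Ps j)).
  exists F; split => // c hc hFc.
  have ha : forall y, y \in map fst l' -> y = 0.
    apply: (@LD I k Lambda K iota hiota (map evK (map snd l'))).
    - by move=> w /in_map_ex [T ->]; apply: evS_const.
    - exact: hind.
    - by rewrite !size_map.
    - rewrite -sumL_lin -hsum // -rep_ok //; exact: hPs.
  rewrite /devalK (@rep_ok I k Lambda k (fun y => y) (dmorph_id k) 1%N c hc).
  by rewrite hsum //; rewrite sumL_lin lin_zero.
pose Fj := fun j => proj1_sig (constructive_indefinite_description _ (stepP j)).
have hFj : forall j, allz evK (Fj j) /\ forall c : 'I_1 -> k, (forall i, dconst Lambda (c i)) ->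
     allz (@evT I k Lambda k (fun y => y) Dk 1%N c) (Fj j) ->
     devalK (fun y => y) c (Ps j) = 0.
  by move=> j; rewrite /Fj; case: constructive_indefinite_description.
pose F := flatten (map Fj (enum 'I_s)).
have hFK : allz evK F by apply/allz_flatten => j _; case: (hFj j).
have [l' [hind hsum]] := @nfa I k Lambda 1%N (rep Lambda Q).
have hQx : sumL iota evK l' != 0.
  by rewrite -hsum // -(@rep_ok I k Lambda K iota hiota 1%N eta heta).
have [p [hpin hpnz]] := sumL_nz hQx.
pose d : tS k Lambda 1 := DConst (Pidx Lambda) 1%N (@toS I k Lambda 0).
pose E' := @DField (idx (~: Lambda)) K DK (fun j => @dder_add _ K (sval j))
   (fun j => @dder_mul _ K (sval j)) (fun i j => @dder_comm _ K (sval i) (sval j)) (dchar0 K).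
have := hdc 1%N (size F) (fun i => nth d F i) p.2.
case.
  exists E', (fun a => iota (sval a)); split.
  - split.
    + by move=> a ->; apply: morph1.
    + by move=> a b c ->; apply: morphD.
    + by move=> a b c ->; apply: morphM.
    + by move=> j a b ->; apply: (dmorph_der hiota).
  - exists eta; split; last exact: hpnz.
    by move/(allz_nth evK F d): hFK.
move=> c [hc hFc hGc].
pose evk := @evT I k Lambda k (fun y => y) Dk 1%N c.
have hFk : allz evk F by apply/(allz_nth evk F d) => i; exact: hFc i.
have hPc : forall j, devalK (fun y => y) c (Ps j) = 0.
  move=> j; apply: (proj2 (hFj j)) => //.
  by move/allz_flatten: hFk; apply; rewrite mem_enum.
have hQc : devalK (fun y => y) c Q != 0.
  rewrite /devalK (@rep_ok I k Lambda k (fun y => y) (dmorph_id k) 1%N c hc) hsum //.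
  rewrite sumL_lin_id; apply/eqP => h0.
  have hSz : forall y, y \in map evk (map snd l') -> dconst Lambda y.
    by move=> y /in_map_ex [T ->]; apply: (@evS_const I k Lambda k (fun y => y) (dmorph_id k)).
  have hsz : size (map evk (map snd l')) = size (map fst l') by rewrite !size_map.
  have := hind (map evk (map snd l')) hsz hSz h0.
  rewrite -map_comp => /(In_zero hpin) h.
  by move/eqP: hGc; apply; exact: h.
have [f [hf1 hf2]] := hiso k (fun y => y) (dmorph_id k) c hPc hQc.
pose c0 := c ord0.
have e := hf2 (DAdd (DVar k I (ord0 : 'I_1)) (DOpp (DConst I 1%N c0))) (DConst I 1%N 0).
exists c0; split; first exact: hc.
have : x + - iota c0 = iota 0 by apply: e; rewrite !hf1 /devalK /= subrr.
by rewrite (morph0 hm) => /eqP; rewrite subr_eq0 => /eqP ->.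
Qed.
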